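(* Let $d$ be a nonnegative integer and let $P_n(x_1,\dots,x_n)$ be the terms defined by $P_0=1$ and $P_{n+1}=(P_n-x_{n+1})\wedge x_{n+1}$. A co-Heyting algebra $L$ satisfies $\dim L\le d$ if and only if $L$ satisfies the identity $P_{d+1}(x_1,\dots,x_{d+1})=0$ (for all $x_1,\dots,x_{d+1}\in L$).
   Context: A co-Heyting algebra is a bounded distributive lattice $(L,0,1,\vee,\wedge)$ such that $a-b=\min\{c\in L: a\le b\vee c\}$ exists for all $a,b$. $\operatorname{Spec}L$ is the set of prime filters ordered by inclusion; the coheight of a prime filter is its cofoundation rank in $\operatorname{Spec}L$ (foundation rank for reverse inclusion: rank $\ge\beta+1$ iff some strictly larger prime filter has rank $\ge\beta$, limits by intersection). $\dim L=\sup\{\operatorname{coheight}\mathfrak p:\mathfrak p\in\operatorname{Spec}L\}$ (the dimension of the element $1$). *)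

(* Defs.v *)
From mathcomp Require Import all_boot all_order.
Set Implicit Arguments. Unset Strict Implicit. Unset Printing Implicit Defensive.
Import Order.TTheory.
Local Open Scope order_scope.

Definition is_coheyting_diff {disp : Order.disp_t} {L : tbDistrLatticeType disp}
  (sub : L -> L -> L) : Prop :=
  forall a b : L, a <= b `|` sub a b /\ (forall c : L, a <= b `|` c -> sub a b <= c).

Definition is_prime_filter {disp : Order.disp_t} {L : tbDistrLatticeType disp}
  (F : L -> Prop) : Prop :=
  [/\ F \top,
      ~ F \bot,
      (forall a b : L, F a -> a <= b -> F b),
      (forall a b : L, F a -> F b -> F (a `&` b))
    & (forall a b : L, F (a `|` b) -> F a \/ F b)].

Definition strict_incl {T : Type} (F G : T -> Prop) : Prop :=
  (forall x, F x -> G x) /\ exists x, G x /\ ~ F x.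

(* coheight_ge n F : the cofoundation rank of F in Spec L is >= n
   (finite levels of the paper's recursion: rank >= 0 always, rank >= n+1 iff
   some strictly larger prime filter has rank >= n). *)
Fixpoint coheight_ge {disp : Order.disp_t} {L : tbDistrLatticeType disp}
  (n : nat) (F : L -> Prop) : Prop :=
  match n with
  | 0 => True
  | n'.+1 => exists G : L -> Prop,
      is_prime_filter G /\ strict_incl F G /\ coheight_ge n' G
  end.

Definition dim_le {disp : Order.disp_t} (L : tbDistrLatticeType disp) (d : nat) : Prop :=
  forall F : L -> Prop, is_prime_filter F -> ~ coheight_ge d.+1 F.

(* The terms P_n : P_0 = 1, P_{n+1} = (P_n - x_{n+1}) `&` x_{n+1};
   the variable x_{k+1} is  x k. *)
Fixpoint Pterm {disp : Order.disp_t} {L : tbDistrLatticeType disp}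
  (sub : L -> L -> L) (n : nat) (x : nat -> L) : L :=
  match n with
  | 0 => \top
  | n'.+1 => sub (Pterm sub n' x) (x n') `&` x n'
  end.

(* Main.v *)
Require Import Defs.
From mathcomp Require Import all_boot all_order.
From mathcomp Require Import boolp classical_sets.
From Stdlib Require Import Classical_Prop.
Import Order.TTheory.
Local Open Scope order_scope.

Section S.
Context {disp : Order.disp_t} {L : tbDistrLatticeType disp}.

Definition is_ideal (I : L -> Prop) :=
  [/\ I \bot, (forall a b : L, I b -> a <= b -> I a)
    & (forall a b, I a -> I b -> I (a `|` b))].

Lemma pft (I : L -> Prop) (c : L) : is_ideal I -> ~ I c ->
  exists F : L -> Prop, is_prime_filter F /\ F c /\ (forall z, F z -> ~ I z).
Proof.
case=> I0 Idown IU nIc.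
pose P (X : L -> Prop) :=
  [/\ (forall a b, X a -> a <= b -> X b), (forall a b, X a -> X b -> X (a `&` b)),
      (forall z, X z -> ~ I z) & (forall z, X z -> X c)].
have [A [[Aup AI Adis Ac] Amax]] : exists A, P A /\ forall B, proper A B -> ~ P B.
  apply: Zorn_bigcup => F FP Ftot; split.
  - move=> a b [X FX Xa] ab; exists X => //; have [] := FP X FX; eauto.
  - move=> a b [X FX Xa] [Y FY Yb]; have [XY|YX] := Ftot X Y FX FY.
    + exists Y => //; have [h1 h2 _ _] := FP Y FY; apply: h2 => //; exact: XY.
    + exists X => //; have [h1 h2 _ _] := FP X FX; apply: h2 => //; exact: YX.
  - move=> z [X FX Xz]; have [_ _ h _] := FP X FX; exact: h.
  - move=> z [X FX Xz]; exists X => //; have [_ _ _ h] := FP X FX; exact: h Xz.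
have Ac0 : A c.
  apply: NNPP => nAc.
  apply: (Amax (fun z => c <= z)).
  - split; first by move=> z Az; exfalso; apply: nAc; exact: Ac Az.
    by move=> h; apply: nAc; apply: h.
  - split.
    + move=> a b ca ab; exact: le_trans ab.
    + by move=> a b ca cb; rewrite lexI ca cb.
    + by move=> z cz Iz; apply: nIc; apply: Idown cz.
    + by move=> z _.
pose gen (a : L) := fun z => exists m, A m /\ m `&` a <= z.
have genP a : ~ A a -> exists m, A m /\ I (m `&` a).
  move=> nAa; apply: NNPP => hne.
  apply: (Amax (gen a)).
  - split; first by move=> z Az; exists z; split => //; exact: leIl.
    by move=> h; apply: nAa; apply: h; exists c; split => //; exact: leIr.
  - split.
    + move=> u v [m [Am mu]] uv; exists m; split => //; exact: le_trans uv.
    + move=> u v [m [Am mu]] [m' [Am' mv]]; exists (m `&` m'); split; first exact: AI.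
      rewrite lexI; apply/andP; split.
      * apply: le_trans mu; apply: leI2 => //; exact: leIl.
      * apply: le_trans mv; apply: leI2 => //; exact: leIr.
    + move=> z [m [Am mz]] Iz; apply: hne; exists m; split => //; exact: Idown mz.
    + by move=> z _; exists c; split => //; exact: leIl.
exists A; split; last by split.
split.
- apply: Aup Ac0 _; exact: lex1.
- by move=> Ab; exact: Adis Ab I0.
- exact: Aup.
- exact: AI.
- move=> a b Aab; apply: NNPP => hn.
  have nAa : ~ A a by move=> h; apply: hn; left.
  have nAb : ~ A b by move=> h; apply: hn; right.
  have [m1 [Am1 I1]] := genP a nAa.
  have [m2 [Am2 I2]] := genP b nAb.
  apply: (Adis (m1 `&` m2 `&` (a `|` b))); first by apply: (AI) => //; exact: AI.
  apply: Idown (IU _ _ I1 I2) _.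
  rewrite meetUr; apply: leU2; apply: leI2 => //; [exact: leIl | exact: leIr].
Qed.

Variable sub : L -> L -> L.
Hypothesis Hsub : is_coheyting_diff sub.

Lemma step (G : L -> Prop) (c b : L) : is_prime_filter G -> G (sub c b) ->
  exists F, is_prime_filter F /\ F c /\ ~ F b /\ (forall z, F z -> G z).
Proof.
case=> Gt Gb Gup GI GU Gcb.
pose I := fun z => exists j, ~ G j /\ z <= b `|` j.
have Iid : is_ideal I.
  split.
  - by exists \bot; split => //; exact: le0x.
  - move=> u v [j [nGj vj]] uv; exists j; split => //; exact: le_trans vj.
  - move=> u v [j [nGj uj]] [j' [nGj' vj']]; exists (j `|` j'); split.
    + by move=> /GU [] //.
    + rewrite leUx; apply/andP; split.
      * apply: le_trans uj _; apply: leU2 => //; exact: leUl.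
      * apply: le_trans vj' _; apply: leU2 => //; exact: leUr.
have nIc : ~ I c.
  move=> [j [nGj cj]]; apply: nGj; apply: Gup Gcb _.
  by have [_ h] := Hsub c b; exact: h.
have [F [PF [Fc Fdis]]] := pft I c Iid nIc.
exists F; split => //; split => //; split.
- by move=> Fb; apply: (Fdis b Fb); exists \bot; split => //; exact: leUl.
- move=> z Fz; apply: NNPP => nGz; apply: (Fdis z Fz); exists z; split => //.
  exact: leUr.
Qed.

Fixpoint chain_down (n : nat) (G : L -> Prop) : Prop :=
  match n with
  | 0 => True
  | n'.+1 => exists F, is_prime_filter F /\ strict_incl F G /\ chain_down n' F
  end.

Lemma chain_downP (x : nat -> L) n : forall G, is_prime_filter G ->
  G (Pterm sub n x) -> chain_down n G.
Proof.
elim: n => [//|n IH] G PG /= HG.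
have PG' := PG; case: PG' => _ _ Gup _ _.
have Gs : G (sub (Pterm sub n x) (x n)) by apply: Gup HG _; exact: leIl.
have Gx : G (x n) by apply: Gup HG _; exact: leIr.
have [F [PF [FP [nFx FG]]]] := step _ _ _ PG Gs.
exists F; split => //; split; last exact: IH.
by split => //; exists (x n).
Qed.

Lemma chain_coh n : forall (G : L -> Prop) m, is_prime_filter G -> chain_down n G ->
  coheight_ge m G -> exists F : L -> Prop, is_prime_filter F /\ coheight_ge (n + m) F.
Proof.
elim: n => [|n IH] G m PG /= Hc Hm; first by exists G.
case: Hc => F [PF [FG HF]].
have := IH F m.+1 PF HF.
rewrite addnS => /(_ _); apply; exists G; split => //.
Qed.

Fixpoint Q (a : L) (n : nat) (x : nat -> L) : L :=
  match n with
  | 0 => a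
  | n'.+1 => sub (Q a n' x) (x n') `&` x n'
  end.

Lemma PQ n x : Pterm sub n x = Q \top n x.
Proof. by elim: n => //= n ->. Qed.

Lemma Qshift n : forall a x,
  Q a n.+1 x = Q (sub a (x 0) `&` x 0) n (fun i => x i.+1).
Proof. elim: n => // n IH a x /=; by rewrite -IH. Qed.

Lemma upQ n : forall F : L -> Prop, is_prime_filter F -> coheight_ge n F ->
  forall a, F a -> exists x, Q a n x <> \bot.
Proof.
elim: n => [|n IH] F PF /=.
  by move=> _ a Fa; exists (fun _ => a) => ab; case: PF => _ Fb _ _ _; apply: Fb; rewrite -ab.
move=> [G [PG [[FG [y [Gy nFy]]] HG]]] a Fa.
have PF' := PF; case: PF' => _ _ Fup _ FU.
have Fs : F (sub a y).
  have := Fup a _ Fa (proj1 (Hsub a y)); case/FU => // /nFy [].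
have PG' := PG; case: PG' => _ _ _ GI _.
have [x Hx] := IH G PG HG _ (GI _ _ (FG _ Fs) Gy).
pose x' := fun i => if i is i'.+1 then x i' else y.
exists x'.
have E : Q a n.+1 x' = Q (sub a y `&` y) n x by apply: Qshift.
by rewrite /= in E; rewrite E.
Qed.

End S.

Theorem proposition3p12 (disp : Order.disp_t) (L : tbDistrLatticeType disp)
  (sub : L -> L -> L) (Hsub : is_coheyting_diff sub) (d : nat) :
  dim_le L d <-> (forall x : nat -> L, Pterm sub d.+1 x = \bot).
Proof.
split.
- move=> Hd x; apply: NNPP => hne.
  have Iid : is_ideal (fun z : L => z <= \bot).
    split => //.
    + move=> a b hb ab; exact: le_trans ab hb.
    + by move=> a b ha hb; rewrite leUx ha hb.
  have [G [PG [GP _]]] := pft _ (Pterm sub d.+1 x) Iid (fun h => hne (le_anti (introT andP (conj h (le0x _))))).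
  have Hc := chain_downP sub Hsub x (d.+1) G PG GP.
  have [F [PF HF]] := chain_coh (d.+1) G 0 PG Hc I.
  rewrite addn0 in HF; exact: Hd F PF HF.
- move=> H F PF HF.
  have PF' := PF; case: PF' => Ft _ _ _ _.
  have [x Hx] := upQ sub Hsub (d.+1) F PF HF \top Ft.
  by apply: Hx; rewrite -PQ; apply: H.
Qed.
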